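(* Let $m$ be a positive integer, $\lambda\in\mathbb{R}$ with $|\lambda-m|<1/10$, $R=\sqrt\lambda$, $w=(0,2)$. If $v\in V_2$ satisfies $B:=|\langle v,w\rangle|\ge R^{1/3}$, then, as $R\to\infty$, $$|S_w(v)|\ll\frac{\log^2 B}{B^2},$$ with an absolute implied constant.
   Context: For $v\in\mathbb{Z}^2$, $c(v)=\frac{1}{|v|^2-\lambda}$ and $C(v,w)=c(v)c(v+w)$. $V_2=\{v\in\mathbb{Z}^2: C(v,w)<0,\ |v|^2\ne m,\ |v+w|^2\ne m,\ \sqrt R/2\le|\langle v,w\rangle|\le3R\}$. $\operatorname{Nbr}_w(v)=\{C(v-w,w)+C(v,w),\ C(v,w)+C(v+w,w)\}$ and $S_w(v)$ is the element of $\operatorname{Nbr}_w(v)$ of smallest absolute value (the smaller one in case of a tie). *)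

(* Defs.v *)
From Stdlib Require Import Reals ZArith.
Open Scope R_scope.

Definition vZ2 : Type := (Z * Z)%type.
Definition vadd (v w : vZ2) : vZ2 := ((fst v + fst w)%Z, (snd v + snd w)%Z).
Definition vsub (v w : vZ2) : vZ2 := ((fst v - fst w)%Z, (snd v - snd w)%Z).
Definition ip (v w : vZ2) : R := IZR (fst v * fst w + snd v * snd w)%Z.
Definition nsq (v : vZ2) : R := ip v v.

(* c(v) = 1/(|v|^2 - lambda)  (Stdlib convention: / 0 = 0) *)
Definition c (lam : R) (v : vZ2) : R := / (nsq v - lam).
Definition CC (lam : R) (v w : vZ2) : R := c lam v * c lam (vadd v w).

(* V_2 membership, with R = sqrt lambda *)
Definition inV2 (m : nat) (lam : R) (w v : vZ2) : Prop :=
  CC lam v w < 0 /\ nsq v <> INR m /\ nsq (vadd v w) <> INR m /\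
  sqrt (sqrt lam) / 2 <= Rabs (ip v w) <= 3 * sqrt lam.

Definition Sw (lam : R) (w v : vZ2) : R :=
  let a := CC lam (vsub v w) w + CC lam v w in
  let b := CC lam v w + CC lam (vadd v w) w in
  if Rlt_dec (Rabs a) (Rabs b) then a
  else if Rlt_dec (Rabs b) (Rabs a) then b
  else Rmin a b.

Definition w0 : vZ2 := (0%Z, 2%Z).

(* Main.v *)
Require Import Defs.
From Stdlib Require Import Reals ZArith Lra Lia Psatz.
Open Scope R_scope.

Lemma ln_le' x y : 0 < x -> x <= y -> ln x <= ln y.
Proof. intros. destruct (Rle_lt_or_eq_dec _ _ H0). left; apply ln_increasing; auto. subst; lra. Qed.

Lemma exp_le' x y : x <= y -> exp x <= exp y.
Proof. intros. destruct (Rle_lt_or_eq_dec _ _ H). left; apply exp_increasing; auto. subst; lra. Qed.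

Lemma frac_bound (N D t : R) : D <> 0 -> t <> 0 -> Rabs N * t^2 <= 11 * Rabs D -> Rabs (N/D) <= 11/t^2.
Proof.
  intros HD Ht H. unfold Rdiv. rewrite Rabs_mult, Rabs_inv.
  assert (0 < Rabs D) by (apply Rabs_pos_lt; auto).
  assert (0 < t^2) by (simpl; nra).
  apply (Rmult_le_reg_r (Rabs D * t^2)). nra.
  replace (Rabs N * / Rabs D * (Rabs D * t ^ 2)) with (Rabs N * t^2) by (field; lra).
  replace (11 * / t ^ 2 * (Rabs D * t ^ 2)) with (11 * Rabs D) by (field; lra). exact H.
Qed.

Lemma keyP (x t : R): 16 <= t -> x < 0 -> 9/10 <= -x -> 9/10 <= x+2*t+4 ->
  Rabs (/(x-2*t+4) * /x + /x * /(x+2*t+4)) <= 11/t^2 \/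
  Rabs (/x * /(x+2*t+4) + /(x+2*t+4) * /(x+4*t+16)) <= 11/t^2.
Proof.
  intros Ht Hx Hs Hy. destruct (Rle_dec (-x) (x+2*t+4)).
  - left. replace (/(x-2*t+4) * /x + /x * /(x+2*t+4)) with ((2*x+8)/((x-2*t+4)*x*(x+2*t+4)))
      by (field; repeat split; lra).
    assert (HD: 0 < (x-2*t+4)*x*(x+2*t+4)).
    { assert (0 < (x-2*t+4)*x) by nra. nra. }
    apply frac_bound; try lra.
    rewrite (Rabs_right ((x-2*t+4)*x*(x+2*t+4))) by lra.
    assert (Rabs (2*x+8) <= 2*(-x)+8) by (split_Rabs; lra).
    assert (t^2 <= (-(x-2*t+4))*(x+2*t+4)) by nra.
    assert (0 <= Rabs (2*x+8)) by apply Rabs_pos.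
    assert (Rabs (2*x+8) * t^2 <= (2*(-x)+8) * t^2) by (apply Rmult_le_compat_r; nra).
    assert ((2*(-x)+8) * t^2 <= 11*(-x) * t^2) by (apply Rmult_le_compat_r; nra).
    assert (11*(-x) * t^2 <= 11*(-x) * ((-(x-2*t+4))*(x+2*t+4))) by (apply Rmult_le_compat_l; nra).
    nra.
  - right. replace (/x * /(x+2*t+4) + /(x+2*t+4) * /(x+4*t+16)) with ((2*x+4*t+16)/(x*(x+2*t+4)*(x+4*t+16)))
      by (field; repeat split; lra).
    assert (HD: x*(x+2*t+4)*(x+4*t+16) < 0).
    { assert (x*(x+2*t+4) < 0) by nra. nra. }
    apply frac_bound; try lra.
    rewrite (Rabs_left (x*(x+2*t+4)*(x+4*t+16))) by lra.
    rewrite (Rabs_right (2*x+4*t+16)) by lra.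
    set (y := x+2*t+4) in *.
    assert (2*x+4*t+16 = 2*y+8) by (unfold y; ring). rewrite H.
    assert (t^2 <= (-x)*(x+4*t+16)) by nra.
    assert ((2*y+8) * t^2 <= 11*y * t^2) by (apply Rmult_le_compat_r; nra).
    assert (11*y * t^2 <= 11*y * ((-x)*(x+4*t+16))) by (apply Rmult_le_compat_l; nra).
    replace (- (x * y * (x + 4 * t + 16))) with (y * ((-x)*(x+4*t+16))) by ring.
    nra.
Qed.

Lemma keyN (x t : R): t <= -16 -> 0 < x -> 9/10 <= x -> 9/10 <= -(x+2*t+4) ->
  Rabs (/(x-2*t+4) * /x + /x * /(x+2*t+4)) <= 11/t^2 \/
  Rabs (/x * /(x+2*t+4) + /(x+2*t+4) * /(x+4*t+16)) <= 11/t^2.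
Proof.
  intros Ht Hx Hs Hy. destruct (Rle_dec x (-(x+2*t+4))).
  - left. replace (/(x-2*t+4) * /x + /x * /(x+2*t+4)) with ((2*x+8)/((x-2*t+4)*x*(x+2*t+4)))
      by (field; repeat split; lra).
    assert (HD: (x-2*t+4)*x*(x+2*t+4) < 0).
    { assert (0 < (x-2*t+4)*x) by nra. nra. }
    apply frac_bound; try lra.
    rewrite (Rabs_left ((x-2*t+4)*x*(x+2*t+4))) by lra.
    rewrite (Rabs_right (2*x+8)) by lra.
    assert (t^2 <= (x-2*t+4)*(-(x+2*t+4))) by nra.
    assert ((2*x+8) * t^2 <= 11*x * t^2) by (apply Rmult_le_compat_r; nra).
    assert (11*x * t^2 <= 11*x * ((x-2*t+4)*(-(x+2*t+4)))) by (apply Rmult_le_compat_l; nra).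
    nra.
  - right. replace (/x * /(x+2*t+4) + /(x+2*t+4) * /(x+4*t+16)) with ((2*x+4*t+16)/(x*(x+2*t+4)*(x+4*t+16)))
      by (field; repeat split; lra).
    assert (HD: 0 < x*(x+2*t+4)*(x+4*t+16)).
    { assert (x*(x+2*t+4) < 0) by nra. nra. }
    apply frac_bound; try lra.
    rewrite (Rabs_right (x*(x+2*t+4)*(x+4*t+16))) by lra.
    set (p := -(x+2*t+4)) in *.
    assert (2*x+4*t+16 = 8 - 2*p) by (unfold p; ring). rewrite H.
    assert (Rabs (8-2*p) <= 11*p) by (split_Rabs; lra).
    assert (t^2 <= x*(-(x+4*t+16))) by (unfold p in *; nra).
    assert (0 <= Rabs (8-2*p)) by apply Rabs_pos.
    assert (Rabs (8-2*p) * t^2 <= 11*p * t^2) by (apply Rmult_le_compat_r; nra).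
    assert (11*p * t^2 <= 11*p * (x*(-(x+4*t+16)))) by (apply Rmult_le_compat_l; nra).
    replace (x * (x + 2 * t + 4) * (x + 4 * t + 16)) with (p * (x*(-(x+4*t+16)))) by (unfold p; ring).
    nra.
Qed.
Lemma IZR_sep (p q:Z) : p <> q -> 1 <= Rabs (IZR p - IZR q).
Proof.
  intros H. destruct (Z.lt_total p q) as [h|[h|h]]; [ | contradiction | ].
  - assert ((p+1 <= q)%Z) by lia. apply IZR_le in H0. rewrite plus_IZR in H0. split_Rabs; lra.
  - assert ((q+1 <= p)%Z) by lia. apply IZR_le in H0. rewrite plus_IZR in H0. split_Rabs; lra.
Qed.

Lemma Sw_le lam w v :
  Rabs (Sw lam w v) <= Rabs (CC lam (vsub v w) w + CC lam v w) /\
  Rabs (Sw lam w v) <= Rabs (CC lam v w + CC lam (vadd v w) w).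
Proof.
  unfold Sw. cbv zeta.
  set (a := CC lam (vsub v w) w + CC lam v w).
  set (b := CC lam v w + CC lam (vadd v w) w).
  destruct (Rlt_dec (Rabs a) (Rabs b)). lra.
  destruct (Rlt_dec (Rabs b) (Rabs a)). lra.
  unfold Rmin; destruct (Rle_dec a b); lra.
Qed.

Lemma sep_lam (m : nat) (lam : R) (n : Z) : Rabs (lam - INR m) < 1/10 -> IZR n <> INR m ->
  9/10 <= Rabs (IZR n - lam).
Proof.
  intros H1 H2. rewrite INR_IZR_INZ in *.
  assert (n <> Z.of_nat m) by (intro; subst; auto).
  apply IZR_sep in H. split_Rabs; lra.
Qed.

Theorem lemma5p4 :
  exists K R0 : R,
    forall (m : nat) (lam : R) (v : vZ2),
      (0 < m)%nat ->
      Rabs (lam - INR m) < 1 / 10 ->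
      R0 <= sqrt lam ->
      inV2 m lam w0 v ->
      Rpower (sqrt lam) (1 / 3) <= Rabs (ip v w0) ->
      Rabs (Sw lam w0 v) <= K * (ln (Rabs (ip v w0))) ^ 2 / (Rabs (ip v w0)) ^ 2.
Proof.
  exists 11, (exp 48). intros m lam v Hm Hlam HR [HC [Hv1 [Hv2 _]]] HB.
  assert (HB16 : 16 <= Rabs (ip v w0)).
  { assert (0 < exp 48) by apply exp_pos.
    assert (ln (exp 48) <= ln (sqrt lam)) by (apply ln_le'; lra).
    rewrite ln_exp in H0.
    unfold Rpower in HB.
    assert (exp 16 <= exp (1/3 * ln (sqrt lam))) by (apply exp_le'; lra).
    pose proof (exp_ineq1_le 16). lra. }
  destruct (Sw_le lam w0 v) as [Sa Sb].
  destruct v as [a0 b0].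
  set (T := ip (a0, b0) w0) in *.
  set (X := nsq (a0,b0) - lam).
  assert (E1 : nsq (vadd (a0,b0) w0) - lam = X + 2*T + 4).
  { unfold X, T, nsq, ip, vadd, w0; simpl.
    replace ((a0 + 0) * (a0 + 0) + (b0 + 2) * (b0 + 2))%Z with ((a0*a0+b0*b0) + 2*(a0*0+b0*2) + 4)%Z by ring.
    repeat rewrite ?plus_IZR, ?mult_IZR. ring. }
  assert (E2 : nsq (vsub (a0,b0) w0) - lam = X - 2*T + 4).
  { unfold X, T, nsq, ip, vsub, w0; simpl.
    replace ((a0 - 0) * (a0 - 0) + (b0 - 2) * (b0 - 2))%Z with ((a0*a0+b0*b0) - 2*(a0*0+b0*2) + 4)%Z by ring.
    repeat rewrite ?minus_IZR, ?plus_IZR, ?mult_IZR. ring. }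
  assert (E3 : nsq (vadd (vadd (a0,b0) w0) w0) - lam = X + 4*T + 16).
  { unfold X, T, nsq, ip, vadd, w0; simpl.
    replace ((a0 + 0 + 0) * (a0 + 0 + 0) + (b0 + 2 + 2) * (b0 + 2 + 2))%Z with ((a0*a0+b0*b0) + 4*(a0*0+b0*2) + 16)%Z by ring.
    repeat rewrite ?plus_IZR, ?mult_IZR. ring. }
  assert (E4 : nsq (vadd (vsub (a0,b0) w0) w0) - lam = X).
  { unfold X, T, nsq, ip, vadd, vsub, w0; simpl.
    replace ((a0 - 0 + 0) * (a0 - 0 + 0) + (b0 - 2 + 2) * (b0 - 2 + 2))%Z with (a0*a0+b0*b0)%Z by ring.
    reflexivity. }
  assert (HX : 9/10 <= Rabs X) by (apply (sep_lam m); auto).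
  assert (HY : 9/10 <= Rabs (X+2*T+4)) by (rewrite <- E1; apply (sep_lam m); auto).
  unfold CC, c in Sa, Sb, HC. rewrite E1, E2, E3, E4 in *. fold X in Sa, Sb, HC.
  assert (HXY : (X < 0 /\ 0 < X+2*T+4) \/ (0 < X /\ X+2*T+4 < 0)).
  { assert (HX0 : X < 0 \/ 0 < X) by (split_Rabs; lra).
    assert (HY0 : X+2*T+4 < 0 \/ 0 < X+2*T+4) by (split_Rabs; lra).
    destruct HX0, HY0; auto; exfalso.
    - assert (0 < /X * /(X+2*T+4)).
      { replace (/X * /(X+2*T+4)) with (/(-X) * /(-(X+2*T+4))) by (field; lra).
        apply Rmult_lt_0_compat; apply Rinv_0_lt_compat; lra. } lra.
    - assert (0 < /X * /(X+2*T+4)).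
      { apply Rmult_lt_0_compat; apply Rinv_0_lt_compat; lra. } lra. }
  assert (Hbound : Rabs (Sw lam w0 (a0, b0)) <= 11 / T^2).
  { destruct (Rle_dec 0 T).
    - rewrite Rabs_right in HB16 by lra.
      destruct HXY as [[h1 h2]|[h1 h2]]; [|lra].
      destruct (keyP X T) as [h|h]; try lra; try (split_Rabs; lra).
    - rewrite Rabs_left in HB16 by lra.
      destruct HXY as [[h1 h2]|[h1 h2]]; [lra|].
      destruct (keyN X T) as [h|h]; try lra; try (split_Rabs; lra). }
  rewrite pow2_abs.
  assert (HL : 1 <= ln (Rabs T)).
  { rewrite <- (ln_exp 1). apply ln_le'. apply exp_pos. pose proof exp_le_3. lra. }
  assert (0 < T^2).
  { assert (T <> 0) by (intro h; rewrite h, Rabs_R0 in HB16; lra). simpl; nra. }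
  apply Rle_trans with (11/T^2); auto.
  unfold Rdiv. apply Rmult_le_compat_r. left; apply Rinv_0_lt_compat; auto.
  simpl. nra.
Qed.
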